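(* The bound $$\int_{-\infty}^s\int_{-\infty}^{s'} \exp \bigl(-a|r-r'| - b|r-s|-c|r'-s'|-d|r-s'|-e|r'-s|\bigr)\,dr'\,dr \le \frac{10\, e^{-(d\wedge e)|s-s'|}}{(b+d)(c+e) + a((b+d)\wedge(c+e))}$$ holds for every $s,s' \in \mathbb{R}$ and every $a,b,c,d,e > 0$. *)

(* Defs.v *)
From HB Require Import structures.
From mathcomp Require Import all_boot all_order all_algebra.
From mathcomp Require Export all_classical all_reals all_analysis.
Set Implicit Arguments. Unset Strict Implicit. Unset Printing Implicit Defensive.
Import Order.TTheory GRing.Theory Num.Theory.
Local Open Scope ring_scope.

Definition kernelA8 (R : realType) (a b c d e s s' r r' : R) : R :=
  expR (- (a * `|r - r'|) - b * `|r - s| - c * `|r' - s'|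
        - d * `|r - s'| - e * `|r' - s|).

(* Main.v *)
Require Import Defs.
From HB Require Import structures.
From mathcomp Require Import all_boot all_order all_algebra.
From mathcomp Require Import all_classical all_reals all_analysis.
From mathcomp Require Import measurable_realfun ring lra.
Import Order.TTheory GRing.Theory Num.Theory.
Local Open Scope classical_set_scope.
Local Open Scope ring_scope.

Module H.
Import numFieldNormedType.Exports.
Section S.
Context {R : realType}.
Local Notation mu := (@lebesgue_measure R).

Lemma c1 (k q : R) : continuous (fun x : R => expR (- (k * (q - x)))).
Proof.
move=> x; apply: continuous_comp; last exact: continuous_expR.
apply: continuousN; apply: continuousM; first exact: cst_continuous.
apply: continuousB; [exact: cst_continuous | exact: cvg_id].
Qed.
Lemma dF (k q x : R) : k != 0 ->
  is_derive x 1 (fun x => - (expR (- (k * (q + x))) / k)) (expR (- (k * (q + x)))).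
Proof.
move=> k0.
have h1 : is_derive x 1 (fun x : R => - (k * (q + x))) (- k).
  have -> : (fun x : R => - (k * (q + x))) = (- k) *: (cst q + id).
    by apply/funext => y; rewrite -mulNr.
  apply: is_derive_eq. by rewrite add0r scaler1.
have h2 : is_derive x 1 (fun x : R => expR (- (k * (q + x)))) (expR (- (k * (q + x))) * - k).
  exact: (is_derive1_comp (f:=expR) (g:=fun x : R => - (k * (q + x)))).
have -> : (fun x => - (expR (- (k * (q + x))) / k)) = (- k^-1) *: (fun x : R => expR (- (k * (q + x)))).
  by apply/funext => y; rewrite mulrC -mulNr.
apply: is_derive_eq. rewrite -[_ *: _]/(_ * _). by rewrite mulNr !mulrN opprK mulrCA mulVf // mulr1.
Qed.

Lemma int_right (k a : R) : 0 < k ->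
  (\int[mu]_(x in `[a, +oo[) (expR (- (k * (x - a))))%:E = (k^-1)%:E)%E.
Proof.
move=> k0.
under eq_integral do rewrite addrC.
rewrite (@ge0_continuous_FTC2y R _ (fun x => - (expR (- (k * (- a + x))) / k)) a 0).
- by rewrite addNr mulr0 oppr0 expR0 -EFinB sub0r opprK div1r.
- by move=> x _; exact: expR_ge0.
- apply: continuous_subspaceT => x /=.
  apply: continuous_comp; last exact: continuous_expR.
  apply: continuousN; apply: continuousM; first exact: cst_continuous.
  apply: continuousD; [exact: cst_continuous | exact: cvg_id].
- rewrite (_ : (fun x => - (expR (- (k * (- a + x))) / k)) =
     (fun x => (- (expR (- (k * - a)) / k)) * expR (- (k * x)))); last first.
    apply/funext => x; rewrite mulrDr opprD expRD.
    by rewrite mulNr mulrAC.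
  rewrite -(mulr0 (- (expR (- (k * - a)) / k))).
  apply: cvgMr.
  rewrite (_ : (fun x => expR (- (k * x))) = (fun z => expR (- z)) \o (fun z => k * z)) //.
  apply: (@cvg_comp _ _ _ _ _ _ (pinfty_nbhs R)); last exact: cvgr_expR.
  exact: gt0_cvgMry.
- by move=> x _; apply: ex_derive; apply: dF; rewrite gt_eqF.
- apply: cvg_at_right_filter.
  have cF : continuous (fun x : R => - (expR (- (k * (- a + x))) / k)).
    move=> x; apply: (continuousN (f := fun x : R => expR (- (k * (- a + x))) / k)); apply: continuousM; last exact: cst_continuous.
    apply: continuous_comp; last exact: continuous_expR.
    apply: continuousN; apply: continuousM; first exact: cst_continuous.
    apply: continuousD; [exact: cst_continuous | exact: cvg_id].
  exact: cF.
- move=> x _; rewrite derive1E; have [_ ->] := dF k (- a) x (lt0r_neq0 k0).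
  by [].
Qed.

Lemma int_half (k q : R) : 0 < k ->
  (\int[mu]_(x in `]-oo, q[) (expR (- (k * (q - x))))%:E = (k^-1)%:E)%E.
Proof.
move=> k0.
have mf : forall D : set R, measurable_fun D (fun x : R => (expR (- (k * (q - x))))%:E).
  move=> D; apply/measurable_EFinP; apply: measurable_funTS.
  exact: continuous_measurable_fun (c1 k q).
rewrite integral_itv_bndo_bndc; last exact: mf.
have := @ge0_integration_by_substitutionNy R (fun x => expR (- (k * (q - x)))) (-q).
rewrite opprK => ->; last 2 first.
- exact: continuous_subspaceT (c1 k q).
- by move=> x _; exact: expR_ge0.
rewrite -(int_right k (- q) k0).
by apply: eq_integral => x _; rewrite /= !opprK addrC.
Qed.

Lemma c2 (k p : R) : continuous (fun x : R => expR (- (k * `|x - p|))).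
Proof.
move=> x; apply: continuous_comp; last exact: continuous_expR.
apply: continuousN; apply: continuousM; first exact: cst_continuous.
apply: (continuous_comp (f := fun x => x - p)); last exact: norm_continuous.
apply: continuousB; [exact: cvg_id | exact: cst_continuous].
Qed.

Lemma int_abs (k p q : R) : 0 < k ->
  (\int[mu]_(x in `]-oo, q[) (expR (- (k * `|x - p|)))%:E <= (2 * k^-1)%:E)%E.
Proof.
move=> k0.
have mf : forall D : set R, measurable_fun D (fun x : R => (expR (- (k * `|x - p|)))%:E).
  move=> D; apply/measurable_EFinP; apply: measurable_funTS.
  exact: continuous_measurable_fun (c2 k p).
apply: (@le_trans _ _ (\int[mu]_(x in `[p, +oo[ `|` `]-oo, p[) (expR (- (k * `|x - p|)))%:E)%E).
  apply: (ge0_subset_integral mu _ _ (mf _)) => //.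
  - exact: measurableU.
  - move=> x /=; rewrite in_itv /= => xq.
    by case: (leP p x) => h; [left|right]; rewrite /= in_itv /= ?andbT.
rewrite (ge0_integral_setU mu _ _ (mf _)); last 2 first.
- by move=> x _; rewrite lee_fin expR_ge0.
- rewrite -setCitvr; exact/disj_setPCl.
2,3: by [].
have -> : (\int[mu]_(x in `[p, +oo[) (expR (- (k * `|x - p|)))%:E = (k^-1)%:E)%E.
  rewrite -(int_right k p k0); apply: eq_integral => x.
  rewrite inE /= in_itv /= andbT => px.
  by rewrite ger0_norm // subr_ge0.
have -> : (\int[mu]_(x in `]-oo, p[) (expR (- (k * `|x - p|)))%:E = (k^-1)%:E)%E.
  rewrite -(int_half k p k0); apply: eq_integral => x.
  rewrite inE /= in_itv /= => px.
  by rewrite distrC ger0_norm // subr_ge0 ltW.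
by rewrite -EFinD mulr_natl mulr2n.
Qed.
Lemma le_int_nm (D : set R) (f g : R -> \bar R) :
  (forall x, D x -> (0 <= f x)%E) -> (forall x, D x -> (f x <= g x)%E) ->
  (\int[mu]_(x in D) f x <= \int[mu]_(x in D) g x)%E.
Proof.
move=> f0 fg.
have g0 : forall x, D x -> (0 <= g x)%E by move=> x Dx; exact: le_trans (f0 _ Dx) (fg _ Dx).
rewrite [X in (X <= _)%E]ge0_integralE// [X in (_ <= X)%E]ge0_integralE//.
apply: le_ereal_sup => _ [h hf <-]; exists h => // x.
apply: le_trans (hf x) _; rewrite /patch; case: ifP => // /[1!inE] Dx.
exact: fg.
Qed.

Lemma int_scale (D : set R) (c : R) (g : R -> R) : measurable D -> 0 <= c ->
  measurable_fun D g -> (forall x, D x -> 0 <= g x) ->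
  (\int[mu]_(x in D) (c * g x)%:E = c%:E * \int[mu]_(x in D) (g x)%:E)%E.
Proof.
move=> mD c0 mg g0.
under eq_integral do rewrite EFinM.
apply: ge0_integralZl => //.
exact/measurable_EFinP.
Qed.

Lemma iter_bound (s s' : R) (K : R -> R -> R) (f : R -> R) (g : R -> R -> R) (F G : R) :
  (forall r r', r < s -> r' < s' -> 0 <= K r r') ->
  (forall r r', r < s -> r' < s' -> K r r' <= f r * g r r') ->
  (forall r, 0 <= f r) -> (forall r r', 0 <= g r r') -> 0 <= G ->
  measurable_fun setT f -> (forall r, measurable_fun setT (g r)) ->
  (forall r, \int[mu]_(r' in `]-oo, s'[) (g r r')%:E <= G%:E)%E ->
  (\int[mu]_(r in `]-oo, s[) (f r)%:E <= F%:E)%E ->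
  (\int[mu]_(r in `]-oo, s[) \int[mu]_(r' in `]-oo, s'[) (K r r')%:E <= (F * G)%:E)%E.
Proof.
move=> K0 Kfg f0 g0 G0 mf mg hG hF.
apply: (@le_trans _ _ (\int[mu]_(r in `]-oo, s[) (G * f r)%:E)%E).
  apply: le_int_nm.
    move=> r; rewrite /= in_itv /= => rs; apply: integral_ge0 => r'.
    rewrite /= in_itv /= => r's; rewrite lee_fin; exact: K0.
  move=> r; rewrite /= in_itv /= => rs.
  apply: (@le_trans _ _ (\int[mu]_(r' in `]-oo, s'[) (f r * g r r')%:E)%E).
    apply: le_int_nm.
      by move=> r'; rewrite /= in_itv /= => r's; rewrite lee_fin K0.
    move=> r'; rewrite /= in_itv /= => r's; rewrite lee_fin; exact: Kfg.
  rewrite int_scale //; last exact: measurable_funTS.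
  rewrite mulrC EFinM; apply: lee_wpmul2l; [rewrite lee_fin; exact: f0 | exact: hG].
rewrite int_scale //; last exact: measurable_funTS.
rewrite mulrC EFinM; apply: lee_wpmul2l; [by rewrite lee_fin | exact: hF].
Qed.

Lemma final_real (E E0 a B G : R) : 0 <= E -> E <= E0 -> 0 < a -> 0 < B -> 0 < G ->
  (E * (2 / (B * G)) <= 10 * E0 / (B * G + a * Num.min B G)) \/
  (E * (4 / (a * B)) <= 10 * E0 / (B * G + a * Num.min B G)).
Proof.
move=> E0p EE0 a0 B0 G0.
set m := Num.min B G.
have mB : m <= B by rewrite /m ge_min lexx.
have mG : m <= G by rewrite /m ge_min lexx orbT.
have m0 : 0 < m by rewrite /m lt_min B0 G0.
have D0 : 0 < B * G + a * m by rewrite addr_gt0 // mulr_gt0.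
have BG0 : 0 < B * G by rewrite mulr_gt0.
have aB0 : 0 < a * B by rewrite mulr_gt0.
have [h|h] := leP (a * m) (B * G).
- left; rewrite mulrA ler_pdivrMr // mulrAC ler_pdivlMr //.
  have h1 : 0 <= E * (B * G - a * m) by rewrite mulr_ge0 // subr_ge0.
  have h2 : 0 <= (E0 - E) * (B * G) by apply: mulr_ge0; [rewrite subr_ge0 | exact: ltW].
  nra.
- right; rewrite mulrA ler_pdivrMr // mulrAC ler_pdivlMr //.
  have h1 : 0 <= E * (a * m - B * G) by rewrite mulr_ge0 // subr_ge0 ltW.
  have h3 : 0 <= E * a * (B - m) by apply: mulr_ge0; [apply: mulr_ge0 =>//; exact: ltW | rewrite subr_ge0].
  have h2 : 0 <= (E0 - E) * (a * B) by apply: mulr_ge0; [rewrite subr_ge0 | exact: ltW].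
  nra.
Qed.

Lemma tri (b d x y r : R) : 0 < b -> 0 < d ->
  (b + d) * `|r - (b * x + d * y) / (b + d)| <= b * `|r - x| + d * `|r - y|.
Proof.
move=> b0 d0.
have bd0 : 0 < b + d by rewrite addr_gt0.
rewrite -{1}(gtr0_norm bd0) -normrM.
have -> : (b + d) * (r - (b * x + d * y) / (b + d)) = b * (r - x) + d * (r - y).
  by field; rewrite lt0r_neq0.
apply: le_trans (ler_normD _ _) _.
by rewrite !normrM (gtr0_norm b0) (gtr0_norm d0).
Qed.

Lemma pw1 (a b c d e s s' r r' : R) : 0 < a -> 0 < b -> 0 < c -> 0 < d -> 0 < e ->
  s' <= s -> r < s -> r' < s' ->
  kernelA8 a b c d e s s' r r' <=
  (expR (- (e * (s - s'))) * expR (- ((b + d) * `|r - (b * s + d * s') / (b + d)|)))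
  * expR (- ((c + e) * (s' - r'))).
Proof.
move=> a0 b0 c0 d0 e0 ss rs rs'.
rewrite /kernelA8 -!expRD ler_expR.
have h1 := tri b d s s' r b0 d0.
have h2 : 0 <= a * `|r - r'| by rewrite mulr_ge0 // ltW.
have -> : `|r' - s'| = s' - r' by rewrite distrC gtr0_norm // subr_gt0.
have -> : `|r' - s| = s - r' by rewrite distrC gtr0_norm // subr_gt0 (lt_le_trans rs').
lra.
Qed.

Lemma pw2 (a b c d e s s' r r' : R) : 0 < a -> 0 < b -> 0 < c -> 0 < d -> 0 < e ->
  s' <= s -> r < s -> r' < s' ->
  kernelA8 a b c d e s s' r r' <=
  (expR (- (e * (s - s'))) * expR (- ((b + d) * `|r - (b * s + d * s') / (b + d)|)))
  * expR (- (a * `|r' - r|)).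
Proof.
move=> a0 b0 c0 d0 e0 ss rs rs'.
rewrite /kernelA8 -!expRD ler_expR.
have h1 := tri b d s s' r b0 d0.
have h2 : 0 <= c * `|r' - s'| by rewrite mulr_ge0 // ltW.
rewrite (distrC r' r).
have -> : `|r' - s| = s - r' by rewrite distrC gtr0_norm // subr_gt0 (lt_le_trans rs').
have h3 : s - r' = (s - s') + (s' - r') by ring.
have h4 : 0 <= e * (s' - r') by rewrite mulr_ge0 // ?subr_ge0 ltW.
lra.
Qed.

Lemma pw3 (a b c d e s s' r r' : R) : 0 < a -> 0 < b -> 0 < c -> 0 < d -> 0 < e ->
  s < s' -> r < s -> r' < s' ->
  kernelA8 a b c d e s s' r r' <=
  (expR (- (d * (s' - s))) * expR (- ((b + d) * (s - r))))
  * expR (- ((c + e) * `|r' - (c * s' + e * s) / (c + e)|)).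
Proof.
move=> a0 b0 c0 d0 e0 ss rs rs'.
rewrite /kernelA8 -!expRD ler_expR.
have h1 := tri c e s' s r' c0 e0.
have h2 : 0 <= a * `|r - r'| by rewrite mulr_ge0 // ltW.
have -> : `|r - s| = s - r by rewrite distrC gtr0_norm // subr_gt0.
have -> : `|r - s'| = s' - r by rewrite distrC gtr0_norm // subr_gt0 (lt_trans rs).
lra.
Qed.

Lemma pw4 (a b c d e s s' r r' : R) : 0 < a -> 0 < b -> 0 < c -> 0 < d -> 0 < e ->
  s < s' -> r < s -> r' < s' ->
  kernelA8 a b c d e s s' r r' <=
  (expR (- (d * (s' - s))) * expR (- ((b + d) * (s - r))))
  * expR (- (a * `|r' - r|)).
Proof.
move=> a0 b0 c0 d0 e0 ss rs rs'.
rewrite /kernelA8 -!expRD ler_expR.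
have h2 : 0 <= c * `|r' - s'| by rewrite mulr_ge0 // ltW.
have h5 : 0 <= e * `|r' - s| by rewrite mulr_ge0 // ltW.
rewrite (distrC r' r).
have -> : `|r - s| = s - r by rewrite distrC gtr0_norm // subr_gt0.
have -> : `|r - s'| = s' - r by rewrite distrC gtr0_norm // subr_gt0 (lt_trans rs).
lra.
Qed.

Lemma le_of_eq' (x y : R) : x = y -> x <= y.
Proof. by move->. Qed.

Lemma mcont (h : R -> R) : continuous h -> measurable_fun setT h.
Proof. exact: continuous_measurable_fun. Qed.

Lemma cmul (C k p : R) : continuous (fun x : R => C * expR (- (k * `|x - p|))).
Proof. by move=> x; apply: (continuousM (s := cst C) (t := fun x : R => expR (- (k * `|x - p|)))); [exact: cst_continuous | exact: c2]. Qed.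

Lemma cmul2 (C k q : R) : continuous (fun x : R => C * expR (- (k * (q - x)))).
Proof. by move=> x; apply: (continuousM (s := cst C) (t := fun x : R => expR (- (k * (q - x))))); [exact: cst_continuous | exact: c1]. Qed.

End S.
End H.
Import H.

Theorem propositionA8 (R : realType) (s s' a b c d e : R)
  (ha : 0 < a) (hb : 0 < b) (hc : 0 < c) (hd : 0 < d) (he : 0 < e) :
  (\int[@lebesgue_measure R]_(r in `]-oo, s[)
     \int[@lebesgue_measure R]_(r' in `]-oo, s'[)
        (kernelA8 a b c d e s s' r r')%:E
   <= (10 * expR (- (Num.min d e * `|s - s'|))
       / ((b + d) * (c + e) + a * Num.min (b + d) (c + e)))%:E)%E.
Proof.
have B0 : 0 < b + d by rewrite addr_gt0.
have G0 : 0 < c + e by rewrite addr_gt0.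
suff [E [E0 [EE0 [h1 h2]]]] : exists E : R, 0 <= E /\ E <= expR (- (Num.min d e * `|s - s'|)) /\
   (\int[@lebesgue_measure R]_(r in `]-oo, s[)
     \int[@lebesgue_measure R]_(r' in `]-oo, s'[)
        (kernelA8 a b c d e s s' r r')%:E <= (E * (2 / ((b + d) * (c + e))))%:E)%E /\
   (\int[@lebesgue_measure R]_(r in `]-oo, s[)
     \int[@lebesgue_measure R]_(r' in `]-oo, s'[)
        (kernelA8 a b c d e s s' r r')%:E <= (E * (4 / (a * (b + d))))%:E)%E.
  have [h|h] := @final_real R E _ a _ _ E0 EE0 ha B0 G0.
  - by apply: le_trans h1 _; rewrite lee_fin.
  - by apply: le_trans h2 _; rewrite lee_fin.
have K0 : forall r r', r < s -> r' < s' -> 0 <= kernelA8 a b c d e s s' r r'.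
  by move=> *; exact: expR_ge0.
have [ss|ss] := leP s' s.
- exists (expR (- (e * (s - s')))); split; first exact: expR_ge0.
  split.
    rewrite ler_expR lerN2 ger0_norm ?subr_ge0 //.
    by apply: ler_wpM2r; [rewrite subr_ge0 | rewrite ge_min lexx orbT].
  set p := (b * s + d * s') / (b + d).
  split.
  + apply: le_trans (@iter_bound R s s' (fun r r' => kernelA8 a b c d e s s' r r')
      (fun r => expR (- (e * (s - s'))) * expR (- ((b + d) * `|r - p|)))
      (fun _ r' => expR (- ((c + e) * (s' - r'))))
      (expR (- (e * (s - s'))) * (2 * (b + d)^-1)) ((c + e)^-1) _ _ _ _ _ _ _ _ _) _.
    * exact: K0.
    * by move=> r r' rs rs'; exact: pw1.
    * by move=> r; rewrite mulr_ge0 // expR_ge0.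
    * by move=> r r'; exact: expR_ge0.
    * by rewrite invr_ge0 ltW.
    * apply: mcont; exact: cmul.
    * move=> r; apply: mcont; exact: c1.
    * by move=> r; rewrite int_half.
    * rewrite int_scale //; last by apply: measurable_funTS; apply: mcont; exact: c2.
      rewrite EFinM; apply: lee_wpmul2l; first by rewrite lee_fin expR_ge0.
      exact: int_abs.
    * rewrite lee_fin; apply: le_of_eq'.
      by field; rewrite !lt0r_neq0.
  + apply: le_trans (@iter_bound R s s' (fun r r' => kernelA8 a b c d e s s' r r')
      (fun r => expR (- (e * (s - s'))) * expR (- ((b + d) * `|r - p|)))
      (fun r r' => expR (- (a * `|r' - r|)))
      (expR (- (e * (s - s'))) * (2 * (b + d)^-1)) (2 * a^-1) _ _ _ _ _ _ _ _ _) _.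
    * exact: K0.
    * by move=> r r' rs rs'; exact: pw2.
    * by move=> r; rewrite mulr_ge0 // expR_ge0.
    * by move=> r r'; exact: expR_ge0.
    * by rewrite mulr_ge0 // invr_ge0 ltW.
    * apply: mcont; exact: cmul.
    * move=> r; apply: mcont; exact: c2.
    * by move=> r; apply: int_abs.
    * rewrite int_scale //; last by apply: measurable_funTS; apply: mcont; exact: c2.
      rewrite EFinM; apply: lee_wpmul2l; first by rewrite lee_fin expR_ge0.
      exact: int_abs.
    * rewrite lee_fin; apply: le_of_eq'.
      by field; rewrite !lt0r_neq0.
- exists (expR (- (d * (s' - s)))); split; first exact: expR_ge0.
  split.
    rewrite ler_expR lerN2 distrC ger0_norm ?subr_ge0; last exact: ltW.
    by apply: ler_wpM2r; [rewrite subr_ge0 ltW | rewrite ge_min lexx].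
  set q := (c * s' + e * s) / (c + e).
  split.
  + apply: le_trans (@iter_bound R s s' (fun r r' => kernelA8 a b c d e s s' r r')
      (fun r => expR (- (d * (s' - s))) * expR (- ((b + d) * (s - r))))
      (fun _ r' => expR (- ((c + e) * `|r' - q|)))
      (expR (- (d * (s' - s))) * (b + d)^-1) (2 * (c + e)^-1) _ _ _ _ _ _ _ _ _) _.
    * exact: K0.
    * by move=> r r' rs rs'; exact: pw3.
    * by move=> r; rewrite mulr_ge0 // expR_ge0.
    * by move=> r r'; exact: expR_ge0.
    * by rewrite mulr_ge0 // invr_ge0 ltW.
    * apply: mcont; exact: cmul2.
    * move=> r; apply: mcont; exact: c2.
    * by move=> r; apply: int_abs.
    * rewrite int_scale //; last by apply: measurable_funTS; apply: mcont; exact: c1.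
      by rewrite int_half // -EFinM.
    * rewrite lee_fin; apply: le_of_eq'.
      by field; rewrite !lt0r_neq0.
  + apply: le_trans (@iter_bound R s s' (fun r r' => kernelA8 a b c d e s s' r r')
      (fun r => expR (- (d * (s' - s))) * expR (- ((b + d) * (s - r))))
      (fun r r' => expR (- (a * `|r' - r|)))
      (expR (- (d * (s' - s))) * (b + d)^-1) (2 * a^-1) _ _ _ _ _ _ _ _ _) _.
    * exact: K0.
    * by move=> r r' rs rs'; exact: pw4.
    * by move=> r; rewrite mulr_ge0 // expR_ge0.
    * by move=> r r'; exact: expR_ge0.
    * by rewrite mulr_ge0 // invr_ge0 ltW.
    * apply: mcont; exact: cmul2.
    * move=> r; apply: mcont; exact: c2.
    * by move=> r; apply: int_abs.
    * rewrite int_scale //; last by apply: measurable_funTS; apply: mcont; exact: c1.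
      by rewrite int_half // -EFinM.
    * rewrite lee_fin.
      apply: (@le_trans _ _ (expR (- (d * (s' - s))) * (2 / (a * (b + d))))).
        by apply: le_of_eq'; field; rewrite !lt0r_neq0.
      apply: ler_wpM2l; first exact: expR_ge0.
      apply: ler_wpM2r; first by rewrite invr_ge0 ltW // mulr_gt0.
      by rewrite ler_nat.
Qed.
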